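(* Every element of $\mathcal{R}$ with small support lies in the commutator subgroup $[\mathcal{R},\mathcal{R}]$.
   Context: $\mathcal{R}$ is the group of rational homeomorphisms of $\{0,1\}^\omega$: those $f$ for which there is a finite asynchronous binary transducer $(S,s_0,t,o)$ ($S$ finite, $t\colon S\times\{0,1\}\to S$, $o\colon S\times\{0,1\}\to\{0,1\}^*$) with $f(\psi)=o(s_0,\psi)$, where for $\sigma_1\sigma_2\cdots$ one sets $s_1=s_0$, $s_{n+1}=t(s_n,\sigma_n)$ and $o(s_0,\sigma_1\sigma_2\cdots)=o(s_1,\sigma_1)o(s_2,\sigma_2)\cdots$. An element $f$ has small support if there is a proper nonempty clopen subset $E\subseteq\{0,1\}^\omega$ such that $f$ is the identity on the complement of $E$. *)

(* Defs.v *)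
From mathcomp Require Import all_boot.
Set Implicit Arguments. Unset Strict Implicit. Unset Printing Implicit Defensive.

Definition cantor := nat -> bool.

Definition agree (n : nat) (x y : cantor) : Prop := forall i, i < n -> x i = y i.

Definition cantor_continuous (f : cantor -> cantor) : Prop :=
  forall x n, exists m, forall y, agree m x y -> agree n (f x) (f y).

Definition cantor_homeo (f : cantor -> cantor) : Prop :=
  cantor_continuous f /\
  exists g : cantor -> cantor, cantor_continuous g /\
    (forall x, g (f x) =1 x) /\ (forall x, f (g x) =1 x).

(* Asynchronous binary transducer (S, s0, t, o).
   state_at s0 t psi k = s_{k+1} (paper indexing, psi 0 = sigma_1). *)
Fixpoint state_at (S : Type) (s0 : S) (t : S -> bool -> S) (psi : cantor) (k : nat) : S :=
  match k with
  | 0 => s0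
  | k'.+1 => t (state_at s0 t psi k') (psi k')
  end.

Definition out_prefix (S : Type) (s0 : S) (t : S -> bool -> S)
    (o : S -> bool -> seq bool) (psi : cantor) (n : nat) : seq bool :=
  flatten [seq o (state_at s0 t psi k) (psi k) | k <- iota 0 n].

(* o(s0, psi) = w as infinite words: every finite output prefix is a prefix of w,
   and the output is infinite. *)
Definition transducer_outputs (S : Type) (s0 : S) (t : S -> bool -> S)
    (o : S -> bool -> seq bool) (psi : cantor) (w : cantor) : Prop :=
  (forall n i, i < size (out_prefix s0 t o psi n) ->
      nth false (out_prefix s0 t o psi n) i = w i) /\
  (forall m, exists n, m <= size (out_prefix s0 t o psi n)).

Definition rational_map (f : cantor -> cantor) : Prop :=
  exists (S : finType) (s0 : S) (t : S -> bool -> S) (o : S -> bool -> seq bool),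
    forall psi, transducer_outputs s0 t o psi (f psi).

Definition in_R (f : cantor -> cantor) : Prop := cantor_homeo f /\ rational_map f.

Definition is_R_commutator (c : cantor -> cantor) : Prop :=
  exists g h gi hi : cantor -> cantor,
    [/\ in_R g, in_R h,
        (forall x, gi (g x) =1 x) /\ (forall x, g (gi x) =1 x),
        (forall x, hi (h x) =1 x) /\ (forall x, h (hi x) =1 x) &
        forall x, c x =1 gi (hi (g (h x)))].

(* the commutator subgroup [R,R]: finite products of commutators
   (the inverse of a commutator is a commutator) *)
Inductive in_commutator_subgroup : (cantor -> cantor) -> Prop :=
| comm_id f : (forall x, f x =1 x) -> in_commutator_subgroup f
| comm_step f g c : in_commutator_subgroup g -> is_R_commutator c ->
    (forall x, f x =1 g (c x)) -> in_commutator_subgroup f.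

Definition cantor_open (U : cantor -> Prop) : Prop :=
  forall x, U x -> exists n, forall y, agree n x y -> U y.
Definition cantor_clopen (E : cantor -> Prop) : Prop :=
  cantor_open E /\ cantor_open (fun x => ~ E x).

Definition small_support (f : cantor -> cantor) : Prop :=
  exists E : cantor -> Prop,
    [/\ cantor_clopen E, (exists x, E x), (exists y, ~ E y) &
        forall x, ~ E x -> f x =1 x].

(* Main.v *)
Require Import Defs.
From mathcomp Require Import all_boot.
From Stdlib Require Import FunctionalExtensionality.
From mathcomp Require Import zify.
Set Implicit Arguments. Unset Strict Implicit. Unset Printing Implicit Defensive.

Definition pre (n : nat) (x : cantor) : seq bool := mkseq x n.
Definition pcat (p : seq bool) (x : cantor) : cantor :=
  fun i => if i < size p then nth false p i else x (i - size p).
Definition sh (n : nat) (x : cantor) : cantor := fun i => x (n + i).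

Lemma feq (x y : cantor) : (forall i, x i = y i) -> x = y.
Proof. exact: functional_extensionality. Qed.

Lemma size_pre n x : size (pre n x) = n.
Proof. by rewrite size_mkseq. Qed.

Lemma nth_pre n x i : i < n -> nth false (pre n x) i = x i.
Proof. by move=> H; rewrite nth_mkseq. Qed.

Lemma preS n x : pre n.+1 x = rcons (pre n x) (x n).
Proof. exact: mkseqS. Qed.


Lemma pre_agree n x y : agree n x y -> pre n x = pre n y.
Proof.
move=> H; apply: (@eq_from_nth _ false); rewrite ?size_pre // => i Hi.
by rewrite !nth_pre // H.
Qed.

Lemma agree_pre n x y : pre n x = pre n y -> agree n x y.
Proof. by move=> H i Hi; rewrite -(nth_pre x Hi) H nth_pre. Qed.

Lemma agree_le m n x y : n <= m -> agree m x y -> agree n x y.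
Proof. by move=> Hnm H i Hi; apply: H; apply: leq_trans Hnm. Qed.

Lemma pre_le m n x y : n <= m -> pre m x = pre m y -> pre n x = pre n y.
Proof. by move=> Hnm H; apply/pre_agree/(agree_le Hnm)/agree_pre. Qed.

Lemma cat_pre_sh n x : pcat (pre n x) (sh n x) = x.
Proof.
apply: feq => i; rewrite /pcat size_pre /sh.
case: ltnP => H; first by rewrite nth_pre.
by rewrite subnKC.
Qed.

Lemma pre_cat p y : pre (size p) (pcat p y) = p.
Proof.
apply: (@eq_from_nth _ false); rewrite ?size_pre // => i Hi.
by rewrite nth_pre // /pcat Hi.
Qed.

Lemma pre_cat_le p y n : n <= size p -> pre n (pcat p y) = take n p.
Proof.
move=> Hn; apply: (@eq_from_nth _ false); rewrite ?size_pre ?size_take.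
  by rewrite -/(minn _ _) (minn_idPl Hn).
move=> i Hi; rewrite nth_pre // nth_take // /pcat (leq_trans Hi Hn) //.
Qed.

Lemma sh_cat p y : sh (size p) (pcat p y) = y.
Proof. by apply: feq => i; rewrite /sh /pcat ltnNge leq_addr /= addKn. Qed.

Lemma cat_cat p q y : pcat p (pcat q y) = pcat (p ++ q) y.
Proof.
apply: feq => i; rewrite /pcat size_cat nth_cat.
case: (ltnP i (size p)) => H1; first by rewrite (ltn_addr _ H1).
by rewrite ltn_subLR // subnDA.
Qed.

Lemma sh_sh m n x : sh m (sh n x) = sh (n + m) x.
Proof. by apply: feq => i; rewrite /sh addnA. Qed.

Lemma pcat_nil x : pcat [::] x = x.
Proof. by apply: feq => i; rewrite /pcat subn0. Qed.

Lemma pre_add m n x : pre (m + n) x = pre m x ++ pre n (sh m x).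
Proof.
apply: (@eq_from_nth _ false); rewrite ?size_cat ?size_pre // => i Hi.
rewrite nth_pre // nth_cat size_pre; case: ltnP => H; first by rewrite nth_pre.
by rewrite nth_pre ?ltn_subLR // /sh subnKC.
Qed.

Lemma sh0 x : sh 0 x = x.
Proof. by apply: feq. Qed.

Section Trans.
Variables (S : Type) (t : S -> bool -> S) (o : S -> bool -> seq bool).

Lemma state_add s x m n :
  state_at s t x (m + n) = state_at (state_at s t x m) t (sh m x) n.
Proof. by elim: n => [|n IH] /=; rewrite ?addn0 // addnS /= IH. Qed.

Lemma out_add s x m n :
  out_prefix s t o x (m + n) =
  out_prefix s t o x m ++ out_prefix (state_at s t x m) t o (sh m x) n.
Proof.
rewrite /out_prefix iotaD map_cat flatten_cat add0n; congr (_ ++ _).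
rewrite -[in LHS](addn0 m) iotaDl -map_comp; congr flatten; apply: eq_map => k /=.
by rewrite state_add.
Qed.

Lemma out_S s x n :
  out_prefix s t o x n.+1 = out_prefix s t o x n ++ o (state_at s t x n) (x n).
Proof. by rewrite -addn1 out_add /out_prefix /= cats0 /sh addn0. Qed.

Lemma out0 s x : out_prefix s t o x 0 = [::].
Proof. by []. Qed.

Lemma state_agree s x y n k : agree n x y -> k <= n ->
  state_at s t x k = state_at s t y k.
Proof.
move=> H; elim: k => [|k IH] Hk //=.
by rewrite IH ?(ltnW Hk) // H.
Qed.

Lemma out_agree s x y n : agree n x y ->
  out_prefix s t o x n = out_prefix s t o y n.
Proof.
move=> H; rewrite /out_prefix; congr flatten; apply/eq_in_map => k.
rewrite mem_iota add0n => /andP [_ Hk].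
by rewrite (state_agree s H (ltnW Hk)) H.
Qed.

Lemma out_le s x n m : n <= m -> exists r,
  out_prefix s t o x m = out_prefix s t o x n ++ r.
Proof. by move=> H; rewrite -(subnKC H) out_add; eexists. Qed.

Lemma prepend s x m w' :
  transducer_outputs (state_at s t x m) t o (sh m x) w' ->
  transducer_outputs s t o x (pcat (out_prefix s t o x m) w').
Proof.
set q := out_prefix s t o x m => -[H1 H2]; split.
  move=> n i Hi; case: (leqP n m) => Hnm.
    have [r Hr] := out_le s x Hnm.
    have Hiq : i < size q by rewrite /q Hr size_cat ltn_addr.
    by rewrite /pcat Hiq /q Hr nth_cat Hi.
  move: Hi; rewrite -(subnKC (ltnW Hnm)) out_add -/q size_cat nth_cat /pcat.
  move=> Hi; case: ltnP => // Hq; apply: H1; by rewrite ltn_subLR.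
move=> k; have [n Hn] := H2 (k - size q); exists (m + n).
by rewrite out_add size_cat -/q -leq_subLR.
Qed.

Lemma shift_TO s x m w :
  transducer_outputs s t o x w ->
  w = pcat (out_prefix s t o x m) (sh (size (out_prefix s t o x m)) w) /\
  transducer_outputs (state_at s t x m) t o (sh m x)
     (sh (size (out_prefix s t o x m)) w).
Proof.
set q := out_prefix s t o x m => -[H1 H2]; split.
  apply: feq => i; rewrite /pcat /sh; case: ltnP => H; first by rewrite H1.
  by rewrite subnKC.
split.
  move=> n i Hi; rewrite /sh -(H1 (m + n)); last by rewrite out_add size_cat -/q ltn_add2l.
  by rewrite out_add -/q nth_cat ltnNge leq_addr /= addKn.
move=> k; have [n Hn] := H2 (size q + k); exists (n - m).
case: (leqP n m) => Hnm.
  have [r Hr] := out_le s x Hnm.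
  move: Hn; rewrite /q Hr size_cat => Hn.
  have ->: k = 0 by lia.
  by [].
move: Hn; rewrite -(subnKC (ltnW Hnm)) out_add size_cat -/q leq_add2l.
by rewrite addKn.
Qed.

Lemma coind (P : S -> cantor -> cantor -> Prop) :
  (forall s x w, P s x w -> transducer_outputs s t o x w \/
     exists m w', [/\ 0 < size (out_prefix s t o x m),
        w = pcat (out_prefix s t o x m) w' & P (state_at s t x m) (sh m x) w']) ->
  forall s x w, P s x w -> transducer_outputs s t o x w.
Proof.
move=> HP.
have key : forall k s x w, P s x w ->
  (forall n i, i < k -> i < size (out_prefix s t o x n) ->
     nth false (out_prefix s t o x n) i = w i) /\
  exists n, k <= size (out_prefix s t o x n).
  elim=> [|k IH] s x w Hp.
    by split=> //; exists 0.
  case: (HP _ _ _ Hp) => [[H1 H2]|[m [w' [Hq Hw Hn]]]].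
    by split=> [n i _|]; [apply: H1 | apply: H2].
  have [J1 [n' Jn]] := IH _ _ _ Hn.
  set q := out_prefix s t o x m in Hq Hw.
  split.
    move=> n i Hik Hi; case: (leqP n m) => Hnm.
      have [r Hr] := out_le s x Hnm.
      have Hiq : i < size q by rewrite /q Hr size_cat ltn_addr.
      by rewrite Hw /pcat Hiq /q Hr nth_cat Hi.
    move: Hi; rewrite -(subnKC (ltnW Hnm)) out_add -/q size_cat nth_cat Hw /pcat.
    move=> Hi; case: ltnP => // Hq'; apply: J1; last by rewrite ltn_subLR.
    lia.
  exists (m + n'); rewrite out_add size_cat -/q.
  by rewrite -add1n leq_add.
move=> s x w Hp; split.
  move=> n i; have [K _] := key i.+1 _ _ _ Hp; exact: K.
move=> k; have [_ K] := key k _ _ _ Hp; exact: K.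
Qed.

Lemma continuous_of_TO (f : cantor -> cantor) s :
  (forall psi, transducer_outputs s t o psi (f psi)) -> cantor_continuous f.
Proof.
move=> H x n; have [H1 H2] := H x; have [m Hm] := H2 n.
exists m => y Hy i Hi.
have [K1 _] := H y.
have E := out_agree s Hy.
have Hi' : i < size (out_prefix s t o x m) by apply: leq_trans Hm.
rewrite -(H1 m i Hi') -(K1 m i); last by rewrite -E.
by rewrite E.
Qed.

End Trans.

Lemma simul (S1 S2 : Type) (t1 : S1 -> bool -> S1) (o1 : S1 -> bool -> seq bool)
  (t2 : S2 -> bool -> S2) (o2 : S2 -> bool -> seq bool) (phi : S1 -> S2) :
  (forall s c, t2 (phi s) c = phi (t1 s c)) ->
  (forall s c, o2 (phi s) c = o1 s c) ->
  forall s x n, state_at (phi s) t2 x n = phi (state_at s t1 x n) /\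
    out_prefix (phi s) t2 o2 x n = out_prefix s t1 o1 x n.
Proof.
move=> Ht Ho s x; elim=> [|n [IH1 IH2]] //=.
by rewrite !out_S IH1 IH2 Ht Ho.
Qed.

Lemma simul_TO (S1 S2 : Type) (t1 : S1 -> bool -> S1) (o1 : S1 -> bool -> seq bool)
  (t2 : S2 -> bool -> S2) (o2 : S2 -> bool -> seq bool) (phi : S1 -> S2) :
  (forall s c, t2 (phi s) c = phi (t1 s c)) ->
  (forall s c, o2 (phi s) c = o1 s c) ->
  forall s x w, transducer_outputs s t1 o1 x w ->
     transducer_outputs (phi s) t2 o2 x w.
Proof.
move=> Ht Ho s x w; rewrite /transducer_outputs.
have E : forall n, out_prefix (phi s) t2 o2 x n = out_prefix s t1 o1 x n.
  by move=> n; have [_ ->] := simul Ht Ho s x n.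
by setoid_rewrite E.
Qed.

Lemma copy_TO (S : Type) (t : S -> bool -> S) (o : S -> bool -> seq bool) s :
  (forall c, t s c = s) -> (forall c, o s c = [:: c]) ->
  forall x, transducer_outputs s t o x x.
Proof.
move=> Ht Ho x.
have St : forall n, state_at s t x n = s by elim=> //= n ->.
have E : forall n, out_prefix s t o x n = pre n x.
  by elim=> // n IH; rewrite out_S St IH Ho preS cats1.
split=> [n i|m]; first by rewrite E size_pre => Hi; rewrite nth_pre.
by exists m; rewrite E size_pre.
Qed.

Lemma rational_of_reach (T : choiceType) (s0 : T) (t : T -> bool -> T)
  (o : T -> bool -> seq bool) (L : seq T) (f : cantor -> cantor) :
  s0 \in L -> (forall s b, s \in L -> t s b \in L) ->
  (forall psi, transducer_outputs s0 t o psi (f psi)) -> rational_map f.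
Proof.
move=> H0 Hcl H.
pose t' := fun (s : seq_sub L) b => (SeqSub (Hcl (ssval s) b (ssvalP s)) : seq_sub L).
pose o' := fun (s : seq_sub L) b => o (ssval s) b.
exists (seq_sub L), (SeqSub H0), t', o' => psi.
have Ht : forall s c, t (ssval s) c = ssval (t' s c) by [].
have Ho : forall s c, o (ssval s) c = o' s c by [].
rewrite /transducer_outputs.
have E : forall n, out_prefix (SeqSub H0) t' o' psi n = out_prefix s0 t o psi n.
  by move=> n; have [_ ->] := simul Ht Ho (SeqSub H0) psi n.
setoid_rewrite E; exact: H.
Qed.

Fixpoint allw k : seq (seq bool) :=
  if k is k'.+1 then map (cons true) (allw k') ++ map (cons false) (allw k')
  else [:: [::]].

Lemma allw_mem s : s \in allw (size s).
Proof.
elim: s => [|b s IH] //=; rewrite mem_cat.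
by case: b; rewrite ?map_f ?orbT.
Qed.

Definition words K := flatten [seq allw k | k <- iota 0 K].

Lemma words_mem K s : size s < K -> s \in words K.
Proof.
move=> H; apply/flatten_mapP; exists (size s); last exact: allw_mem.
by rewrite mem_iota.
Qed.

Lemma allw_size k s : s \in allw k -> size s = k.
Proof.
elim: k s => [|k IH] s /=; first by rewrite inE => /eqP ->.
by rewrite mem_cat => /orP [] /mapP [s' /IH <- ->].
Qed.

Lemma words_size K s : s \in words K -> size s < K.
Proof.
by case/flatten_mapP => k; rewrite mem_iota add0n => /andP [_ Hk] /allw_size ->.
Qed.

Definition PRt (K : nat) (s : option (seq bool)) (c : bool) : option (seq bool) :=
  if s is Some buf then (if size (rcons buf c) < K then Some (rcons buf c) else None)
  else None.
Definition PRo (K : nat) (P : seq bool -> seq bool) (s : option (seq bool)) (c : bool) :=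
  if s is Some buf then (if size (rcons buf c) < K then [::] else P (rcons buf c))
  else [:: c].

Lemma PR_buf K P x k : k < K ->
  state_at (Some [::]) (PRt K) x k = Some (pre k x) /\
  out_prefix (Some [::]) (PRt K) (PRo K P) x k = [::].
Proof.
elim: k => [|k IH] Hk //=.
have [E1 E2] := IH (ltnW Hk).
by rewrite out_S E1 E2 /= -preS size_pre Hk.
Qed.

Lemma PR_full K P x : 0 < K ->
  state_at (Some [::]) (PRt K) x K = None /\
  out_prefix (Some [::]) (PRt K) (PRo K P) x K = P (pre K x).
Proof.
case: K => // k _.
have [E1 E2] := PR_buf P x (ltnSn k).
by rewrite /= out_S E1 E2 /= -preS size_pre ltnn.
Qed.

Lemma PR_TO K P x : 0 < K ->
  transducer_outputs (Some [::]) (PRt K) (PRo K P) x (pcat (P (pre K x)) (sh K x)).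
Proof.
move=> HK; have [E1 E2] := PR_full P x HK.
rewrite -E2; apply: prepend; rewrite E1.
by apply: copy_TO.
Qed.

Lemma PR_rational K P : 0 < K ->
  rational_map (fun x => pcat (P (pre K x)) (sh K x)).
Proof.
move=> HK.
apply: (@rational_of_reach _ (Some [::]) (PRt K) (PRo K P)
   (None :: map Some (words K))).
- by rewrite inE map_f ?orbT // words_mem.
- move=> [buf|] b; rewrite !inE //= => _.
  by case: ifP => H; rewrite ?eqxx // map_f ?orbT // words_mem.
- by move=> psi; apply: PR_TO.
Qed.

Section GG.
Variable L : nat.
Hypothesis L0 : 0 < L.

Definition G (a b : seq bool) (x : cantor) : cantor :=
  if pre L x == a then
    (if pre L (sh L x) == b then pcat b (pcat a (sh (L + L) x)) else sh L x)
  else pcat b x.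

Definition PG (a b : seq bool) (s : seq bool) :=
  if take L s == a then (if drop L s == b then b ++ a else drop L s) else b ++ s.

Lemma G_PR a b x : G a b x = pcat (PG a b (pre (L + L) x)) (sh (L + L) x).
Proof.
rewrite /G /PG pre_add take_size_cat ?size_pre // drop_size_cat ?size_pre //.
case: eqP => _; last by rewrite -!cat_cat -sh_sh !cat_pre_sh.
case: eqP => _; first by rewrite cat_cat.
by rewrite -sh_sh cat_pre_sh.
Qed.

Lemma G_rational a b : rational_map (G a b).
Proof.
have E : G a b = (fun x => pcat (PG a b (pre (L + L) x)) (sh (L + L) x)).
  by apply: functional_extensionality => x; apply: G_PR.
by rewrite E; apply: PR_rational; rewrite addn_gt0 L0.
Qed.

Lemma G_TO a b : exists S (s0 : S) t o, forall psi, transducer_outputs s0 t o psi (G a b psi).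
Proof.
exists (option (seq bool)), (Some [::]), (PRt (L + L)), (PRo (L + L) (PG a b)) => psi.
by rewrite G_PR; apply: PR_TO; rewrite addn_gt0 L0.
Qed.

Lemma G_cont a b : cantor_continuous (G a b).
Proof. by have [S [s0 [t [o H]]]] := G_TO a b; apply: continuous_of_TO H. Qed.

Lemma G_inv a b : size a = L -> size b = L -> forall x, G b a (G a b x) = x.
Proof.
have pc : forall p y, size p = L -> pre L (pcat p y) = p by move=> p y <-; apply: pre_cat.
have sc : forall p y, size p = L -> sh L (pcat p y) = y by move=> p y <-; apply: sh_cat.
move=> Ha Hb x; rewrite {2}/G.
case: eqP => E1.
  case: eqP => E2.
    rewrite /G pc // eqxx -sh_sh !sc // pc // eqxx -sh_sh !sc //.
    by rewrite -E1 -E2 !cat_pre_sh.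
  rewrite /G; case: eqP => // _.
  by rewrite -E1 cat_pre_sh.
rewrite /G pc // eqxx sc //.
by case: eqP.
Qed.

End GG.

Section HH.
Variable L : nat.
Hypothesis L0 : 0 < L.
Variables u w : seq bool.
Hypothesis Hu : size u = L.
Hypothesis Hw : size w = L.
Hypothesis Huw : u != w.

Lemma pcL p y : size p = L -> pre L (pcat p y) = p.
Proof. by move=> <-; apply: pre_cat. Qed.
Lemma scL p y : size p = L -> sh L (pcat p y) = y.
Proof. by move=> <-; apply: sh_cat. Qed.

Lemma pre_of_agree m n x y : n <= m -> agree m x y -> pre n y = pre n x.
Proof. by move=> H1 H2; apply/esym/pre_agree; apply: agree_le H2. Qed.

Fixpoint HA (F : cantor -> cantor) n x : cantor :=
  match n with
  | 0 => x
  | n'.+1 => if pre L x == u then pcat u (HA F n' (sh L x))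
             else if pre L x == w then x else F x
  end.

Definition Hp F x : cantor := fun i => HA F i.+1 x i.
Definition H F x : cantor := if pre L x == u then pcat u (Hp F (sh L x)) else x.

Lemma HA_stab F n1 n2 x i : i < n1 -> i < n2 -> HA F n1 x i = HA F n2 x i.
Proof.
elim: n1 n2 x i => [|n1 IH] [|n2] x i // H1 H2 /=.
case: ifP => // _; rewrite /pcat Hu; case: ltnP => // Hi.
apply: IH; lia.
Qed.

Lemma Hp_u F x : pre L x = u -> Hp F x = pcat u (Hp F (sh L x)).
Proof.
move=> E; apply: feq => i; rewrite {1}/Hp /= E eqxx /pcat Hu -/(Hp F (sh L x)).
case: ltnP => // Hi; rewrite -/(Hp F (sh L x) (i - L)) /Hp; apply: HA_stab; lia.
Qed.

Lemma Hp_w F x : pre L x = w -> Hp F x = x.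
Proof.
move=> E; apply: feq => i; rewrite /Hp /= E eqxx.
by rewrite eq_sym (negbTE Huw).
Qed.

Lemma Hp_Y F x : pre L x <> u -> pre L x <> w -> Hp F x = F x.
Proof.
by move=> E1 E2; apply: feq => i; rewrite /Hp /=; do 2 case: eqP => //.
Qed.

Lemma Hp_cont F : cantor_continuous F -> cantor_continuous (Hp F).
Proof.
move=> HF x n; elim/ltn_ind: n x => n IH x.
case: (pre L x =P u) => Eu.
  have [m' Hm'] : exists m', forall y, agree m' (sh L x) y ->
      forall i, L <= i < n -> Hp F (sh L x) (i - L) = Hp F y (i - L).
    case: (ltnP L n) => HLn.
      have [m' Hm'] := IH (n - L) ltac:(lia) (sh L x).
      exists m' => y Hy i /andP[Hi1 Hi2]; apply: Hm' => //; lia.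
    by exists 0 => y _ i; lia.
  exists (L + m') => y Hy i Hi.
  have Ey : pre L y = u.
    by rewrite -Eu; apply: pre_of_agree Hy; apply: leq_addr.
  rewrite (Hp_u F Eu) (Hp_u F Ey) /pcat Hu.
  case: ltnP => // HiL; apply: Hm' => [j Hj|]; last by rewrite HiL.
  by rewrite /sh; apply: Hy; rewrite ltn_add2l.
case: (pre L x =P w) => Ew.
  exists (maxn L n) => y Hy.
  have Ey : pre L y = w.
    by rewrite -Ew; apply: pre_of_agree Hy; apply: leq_maxl.
  rewrite (Hp_w F Ew) (Hp_w F Ey); exact: agree_le (leq_maxr _ _) Hy.
have [m' Hm'] := HF x n.
exists (maxn L m') => y Hy.
have Ey : pre L y = pre L x by apply: pre_of_agree Hy; apply: leq_maxl.
rewrite (Hp_Y F Eu Ew) Hp_Y ?Ey //; apply: Hm'; exact: agree_le (leq_maxr _ _) Hy.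
Qed.

Lemma H_cont F : cantor_continuous F -> cantor_continuous (H F).
Proof.
move=> HF x n; have HC := Hp_cont HF.
case: (pre L x =P u) => Eu.
  have [m' Hm'] := HC (sh L x) (n - L).
  exists (L + m') => y Hy i Hi.
  have Ey : pre L y = u.
    by rewrite -Eu; apply: pre_of_agree Hy; apply: leq_addr.
  rewrite /H Eu Ey eqxx /pcat Hu.
  case: ltnP => // HiL; apply: Hm'; last by lia.
  by move=> j Hj; rewrite /sh; apply: Hy; rewrite ltn_add2l.
exists (maxn L n) => y Hy.
have Ey : pre L y = pre L x by apply: pre_of_agree Hy; apply: leq_maxl.
rewrite /H Ey; case: eqP => // _; exact: agree_le (leq_maxr _ _) Hy.
Qed.

Lemma Hp_inv F G : (forall x, F (G x) = x) ->
  (forall x, pre L x <> u -> pre L x <> w -> pre L (G x) <> u /\ pre L (G x) <> w) ->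
  forall x, Hp F (Hp G x) = x.
Proof.
move=> FG GY x; apply: feq => i; elim/ltn_ind: i x => i IH x.
case: (pre L x =P u) => Eu.
  rewrite (Hp_u G Eu) (Hp_u F (pcL _ Hu)) scL //.
  rewrite -{2}(cat_pre_sh L x) Eu /pcat Hu; case: ltnP => // Hi.
  apply: IH; lia.
case: (pre L x =P w) => Ew; first by rewrite !(Hp_w _ Ew).
have [E1 E2] := GY x Eu Ew.
by rewrite (Hp_Y G Eu Ew) (Hp_Y F E1 E2) FG.
Qed.

Lemma H_inv F G : (forall x, F (G x) = x) ->
  (forall x, pre L x <> u -> pre L x <> w -> pre L (G x) <> u /\ pre L (G x) <> w) ->
  forall x, H F (H G x) = x.
Proof.
move=> FG GY x; rewrite {2}/H; case: eqP => Eu; last by rewrite /H (introF eqP Eu).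
rewrite /H.
by rewrite pcL // eqxx scL // Hp_inv // -Eu cat_pre_sh.
Qed.

Section Tr.
Variables (S : finType) (s0 : S) (t : S -> bool -> S) (o : S -> bool -> seq bool).
Variable F : cantor -> cantor.
Hypothesis HF : forall psi, transducer_outputs s0 t o psi (F psi).

Definition St := (option (bool * seq bool) + S)%type.
Definition z0 : cantor := fun _ => false.

Definition decT (ph : bool) (s' : seq bool) : St :=
  if s' == u then inl (Some (true, [::]))
  else if ~~ ph || (s' == w) then inl None
  else inr (state_at s0 t (pcat s' z0) L).
Definition decO (ph : bool) (s' : seq bool) : seq bool :=
  if s' == u then u
  else if ~~ ph || (s' == w) then s'
  else out_prefix s0 t o (pcat s' z0) L.

Definition tH (st : St) (c : bool) : St :=
  match st with
  | inl None => inl None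
  | inl (Some (ph, buf)) =>
      if size (rcons buf c) < L then inl (Some (ph, rcons buf c)) else decT ph (rcons buf c)
  | inr s => inr (t s c)
  end.
Definition oH (st : St) (c : bool) : seq bool :=
  match st with
  | inl None => [:: c]
  | inl (Some (ph, buf)) =>
      if size (rcons buf c) < L then [::] else decO ph (rcons buf c)
  | inr s => o s c
  end.

Definition AU : St := inl (Some (true, [::])).
Definition ST : St := inl (Some (false, [::])).

Lemma H_buf ph x k : k < L ->
  state_at (inl (Some (ph, [::]))) tH x k = inl (Some (ph, pre k x)) /\
  out_prefix (inl (Some (ph, [::]))) tH oH x k = [::].
Proof.
elim: k => [|k IH] Hk //=.
have [E1 E2] := IH (ltnW Hk).
by rewrite out_S E1 E2 /= -preS size_pre Hk.
Qed.

Lemma H_full ph x :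
  state_at (inl (Some (ph, [::]))) tH x L = decT ph (pre L x) /\
  out_prefix (inl (Some (ph, [::]))) tH oH x L = decO ph (pre L x).
Proof.
set st := inl (Some (ph, [::])).
have E : state_at st tH x L = tH (state_at st tH x L.-1) (x L.-1)
  by rewrite -{1}(prednK L0).
have E' : out_prefix st tH oH x L = out_prefix st tH oH x L.-1 ++
     oH (state_at st tH x L.-1) (x L.-1)
  by rewrite -{1}(prednK L0) out_S.
have HL : L.-1 < L by rewrite prednK.
have [E1 E2] := H_buf ph x HL.
by rewrite E E' E1 E2 /= -preS (prednK L0) size_pre ltnn.
Qed.

Lemma agree_pcat x : agree L x (pcat (pre L x) z0).
Proof. by move=> i Hi; rewrite /pcat size_pre Hi nth_pre. Qed.

Lemma copy_None x : transducer_outputs (inl None) tH oH x x.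
Proof. by apply: copy_TO. Qed.

Lemma Hp_TO_Y x : pre L x <> u -> pre L x <> w ->
  transducer_outputs AU tH oH x (F x).
Proof.
move=> Eu Ew.
have [E1 E2] := H_full true x.
have D1 : decT true (pre L x) = inr (state_at s0 t x L).
  rewrite /decT; do 2 case: eqP => //= _.
  by rewrite -(state_agree t s0 (agree_pcat x) (leqnn L)).
have D2 : decO true (pre L x) = out_prefix s0 t o x L.
  rewrite /decO; do 2 case: eqP => //= _.
  by rewrite -(out_agree t o s0 (agree_pcat x)).
have [K1 K2] := shift_TO L (HF x).
rewrite K1 -D2 -E2; apply: prepend; rewrite E1 D1.
apply: (simul_TO (phi := inr) (t1 := t) (o1 := o)) => //; by rewrite E2 D2.
Qed.

Lemma Hp_TO x : transducer_outputs AU tH oH x (Hp F x).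
Proof.
apply: (@coind _ tH oH (fun st x v => st = AU /\ v = Hp F x)) => // st y v [-> ->].
have [E1 E2] := H_full true y.
case: (pre L y =P u) => Eu.
  right; exists L, (Hp F (sh L y)); rewrite E1 E2 /decT /decO Eu eqxx Hu.
  by split=> //; rewrite (Hp_u F Eu).
case: (pre L y =P w) => Ew.
  left; rewrite (Hp_w F Ew).
  suff: transducer_outputs AU tH oH y (pcat (out_prefix AU tH oH y L) (sh L y)).
    by rewrite E2 /decO (introF eqP Eu) Ew eqxx orbT -Ew cat_pre_sh.
  apply: prepend; rewrite E1 /decT (introF eqP Eu) Ew eqxx orbT.
  exact: copy_None.
left; rewrite (Hp_Y F Eu Ew); exact: Hp_TO_Y.
Qed.

Lemma H_TO x : transducer_outputs ST tH oH x (H F x).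
Proof.
have [E1 E2] := H_full false x.
rewrite /H; case: (pre L x =P u) => Eu.
  suff: transducer_outputs ST tH oH x (pcat (out_prefix ST tH oH x L) (Hp F (sh L x))).
    by rewrite E2 /decO Eu eqxx.
  apply: prepend; rewrite E1 /decT Eu eqxx; exact: Hp_TO.
suff: transducer_outputs ST tH oH x (pcat (out_prefix ST tH oH x L) (sh L x)).
  by rewrite E2 /decO (introF eqP Eu) /= cat_pre_sh.
apply: prepend; rewrite E1 /decT (introF eqP Eu) /=; exact: copy_None.
Qed.

Definition reach : seq St :=
  inl None :: map (fun s => inl (Some (true, s))) (words L) ++
  map (fun s => inl (Some (false, s))) (words L) ++ map inr (enum S).

Definition okst (st : St) : bool :=
  match st with inl (Some (_, buf)) => size buf < L | _ => true end.

Lemma reach_mem st : okst st -> st \in reach.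
Proof.
rewrite /reach; case: st => [[[ph buf]|]|s] //= H; rewrite inE ?mem_cat ?eqxx //.
  case: ph.
    by rewrite (map_f (fun s => inl (Some (true, s)))) // words_mem.
  by rewrite (map_f (fun s => inl (Some (false, s)))) ?orbT // words_mem.
by rewrite (map_f inr) ?orbT // mem_enum.
Qed.

Lemma okst_t st c : okst st -> okst (tH st c).
Proof.
case: st => [[[ph buf]|]|s] //= _.
case: ifP => //= _; rewrite /decT; case: ifP => //= _; case: ifP => //.
Qed.

Lemma reach_ok st : st \in reach -> okst st.
Proof.
rewrite /reach inE !mem_cat.
case/orP => [/eqP -> //|]; case/orP => [/mapP [s /words_size H ->] //|].
by case/orP => [/mapP [s /words_size H ->] //|/mapP [s _ ->] //].
Qed.

Lemma H_rational : rational_map (H F).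
Proof.
apply: (@rational_of_reach _ ST tH oH reach).
- by apply: reach_mem.
- by move=> st b /reach_ok Hst; apply: reach_mem; apply: okst_t.
- exact: H_TO.
Qed.

End Tr.
End HH.

Section Key.
Variable L : nat.
Hypothesis L0 : 0 < L.
Variables u w : seq bool.
Hypothesis Hu : size u = L.
Hypothesis Hw : size w = L.
Hypothesis Huw : u != w.
Variable f : cantor -> cantor.
Hypothesis ffix : forall z, pre L z = u \/ pre L z = w -> f z = z.
Hypothesis fY : forall z, pre L z <> u -> pre L z <> w ->
  pre L (f z) <> u /\ pre L (f z) <> w.

Lemma g_notw x : pre L x <> w -> G L w u x = pcat u x.
Proof. by move=> E; rewrite /G (introF eqP E). Qed.

Lemma key x : H L u w f (G L w u x) = G L w u (H L u w f (f x)).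
Proof.
have Hwu : w != u by rewrite eq_sym.
case: (pre L x =P w) => Ew.
  rewrite ffix; last by right.
  have -> : H L u w f x = x.
    by rewrite /H Ew (negbTE Hwu).
  rewrite {1}/G Ew eqxx; case: (pre L (sh L x) =P u) => Eu'.
    rewrite /H (pcL _ Hu) eqxx (scL _ Hu) (Hp_w Huw) ?(pcL _ Hw) //.
    by rewrite /G Ew eqxx Eu' eqxx.
  by rewrite /H (introF eqP Eu') /G Ew eqxx (introF eqP Eu').
case: (pre L x =P u) => Eu.
  rewrite ffix; last by left.
  rewrite g_notw // /H (pcL _ Hu) eqxx (scL _ Hu) Eu eqxx.
  rewrite (Hp_u L0 Hu Hw Huw _ Eu) g_notw // (pcL _ Hu).
  by move=> E; move: Huw; rewrite E eqxx.
have [F1 F2] := fY Eu Ew.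
rewrite g_notw // /H (pcL _ Hu) eqxx (scL _ Hu) (Hp_Y _ Eu Ew).
by rewrite (introF eqP F1) g_notw.
Qed.

End Key.

Unset Implicit Arguments.
Theorem lemma2p7 (f : cantor -> cantor) :
  in_R f -> small_support f -> in_commutator_subgroup f.
Proof.
move=> [[fc [fi [fic [fif ffi]]]] [S [s0 [t [o HT]]]]] [E [[_ Eco] _ [y Ey] Hid]].
have fif' : forall x, fi (f x) = x by move=> x; apply: feq; apply: fif.
have ffi' : forall x, f (fi x) = x by move=> x; apply: feq; apply: ffi.
have [n Hn] := Eco y Ey.
pose L := n.+1.
pose u := pre L y.
pose w := rcons (pre n y) (~~ y n).
have L0 : 0 < L by [].
have Hu : size u = L by rewrite size_pre.
have Hw : size w = L by rewrite size_rcons size_pre.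
have Huw : u != w.
  apply/negP => /eqP E'.
  have := congr1 (fun s => nth false s n) E'.
  rewrite /u nth_pre // nth_rcons size_pre ltnn eqxx.
  by case: (y n).
have ffix : forall z, pre L z = u \/ pre L z = w -> f z = z.
  move=> z Hz; apply: feq; apply: Hid; apply: Hn => i Hi.
  have HiL : i < L by apply: ltnW.
  rewrite -(nth_pre z HiL).
  case: Hz => ->; first by rewrite nth_pre.
  by rewrite nth_rcons size_pre Hi nth_pre.
have fY : forall z, pre L z <> u -> pre L z <> w ->
    pre L (f z) <> u /\ pre L (f z) <> w.
  move=> z E1 E2; split=> E3.
    have := ffix (f z) (or_introl E3) => /(congr1 fi); rewrite !fif' => E4.
    by apply: E1; rewrite -E4.
  have := ffix (f z) (or_intror E3) => /(congr1 fi); rewrite !fif' => E4.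
  by apply: E2; rewrite -E4.
have fiY : forall z, pre L z <> u -> pre L z <> w ->
    pre L (fi z) <> u /\ pre L (fi z) <> w.
  move=> z E1 E2; split=> E3.
    have := ffix (fi z) (or_introl E3); rewrite ffi' => E4.
    by apply: E1; rewrite E4.
  have := ffix (fi z) (or_intror E3); rewrite ffi' => E4.
  by apply: E2; rewrite E4.
pose h := H L u w f.
pose hi := H L u w fi.
pose g := G L w u.
pose gi := G L u w.
have hih : forall x, hi (h x) = x by apply: H_inv.
have hhi : forall x, h (hi x) = x by apply: H_inv.
have gig : forall x, gi (g x) = x by apply: G_inv.
have ggi : forall x, g (gi x) = x by apply: G_inv.
have Rh : in_R h.
  split; last exact: (H_rational L0 Hu Hw Huw HT).
  split; first exact: H_cont.
  exists hi; split; first exact: H_cont.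
  by split=> x i; rewrite ?hih ?hhi.
have Rg : in_R g.
  split; last exact: G_rational.
  split; first exact: G_cont.
  exists gi; split; first exact: G_cont.
  by split=> x i; rewrite ?gig ?ggi.
apply: (@comm_step f id f); first by apply: comm_id.
  exists h, g, hi, gi; split=> //.
  - by split=> x i; rewrite ?hih ?hhi.
  - by split=> x i; rewrite ?gig ?ggi.
  move=> x i; rewrite /h /g (key L0 Hu Hw Huw ffix fY) -/g -/h gig hih //.
by [].
Qed.
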